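(* For every integer $d\ge 1$, the $d$-dimensional hypercube $Q_d$ satisfies $\sigma_T(Q_d)=2d-1$.
   Context: $Q_d=K_2\times\cdots\times K_2$ ($d$ factors) is the graph whose vertices are the 0-1 vectors of length $d$, two vertices adjacent iff they differ in exactly one coordinate. For a spanning tree $T$ of a connected graph $G$, $d_T(u,v)$ is the distance between $u$ and $v$ in $T$, $\sigma_T(G,T):=\max_{uv\in E(G)} d_T(u,v)$, and the tree-stretch is $\sigma_T(G):=\min\{\sigma_T(G,T): T \text{ a spanning tree of } G\}$. *)

(* Defs.v *)
From mathcomp Require Import all_boot.
Set Implicit Arguments. Unset Strict Implicit. Unset Printing Implicit Defensive.

(* A simple graph on a finite vertex type T is a symmetric irreflexive
   relation. *)

Definition hypercube_vertex (d : nat) := d.-tuple bool.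
Definition hypercube_adj (d : nat) : rel (d.-tuple bool) :=
  fun u v => #|[set i : 'I_d | tnth u i != tnth v i]| == 1.

Definition walk_of_len (T : finType) (e : rel T) (n : nat) (u v : T) : bool :=
  [exists p : n.-tuple T, path e u p && (last u p == v)].

(* graph distance: least n with a walk of length n (walks of length
   <= #|T| suffice); set to #|T| if no walk exists (never used for
   connected graphs) *)
Definition gdist (T : finType) (e : rel T) (u v : T) : nat :=
  find (fun n => walk_of_len e n u v) (iota 0 #|T|).

Definition connected_graph (T : finType) (e : rel T) : Prop :=
  forall u v : T, connect e u v.

Definition acyclic (T : finType) (e : rel T) : Prop :=
  forall c : seq T, uniq c -> 3 <= size c -> ~~ cycle e c.

Definition spanning_tree (T : finType) (g t : rel T) : Prop :=
  [/\ symmetric t, subrel t g, connected_graph t & acyclic t].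

Definition stretch (T : finType) (g t : rel T) : nat :=
  \max_(p : T * T | g p.1 p.2) gdist t p.1 p.2.

Definition is_tree_stretch (T : finType) (g : rel T) (k : nat) : Prop :=
  (exists t : rel T, spanning_tree g t /\ stretch g t = k) /\
  (forall t : rel T, spanning_tree g t -> k <= stretch g t).

(* Main.v *)
Require Import Defs.
From mathcomp Require Import all_boot zify.
Set Implicit Arguments. Unset Strict Implicit. Unset Printing Implicit Defensive.

Definition isedge (T : eqType) (a b u v : T) :=
  ((u == a) && (v == b)) || ((u == b) && (v == a)).
Definition Ecut (T : finType) (t : rel T) (a b : T) : rel T :=
  fun u v => t u v && ~~ isedge a b u v.

Lemma Ecut_swap (T : finType) (t : rel T) a b : Ecut t a b =2 Ecut t b a.
Proof. by move=> u v; rewrite /Ecut /isedge orbC. Qed.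

Lemma Ecut_sub (T : finType) (t : rel T) a b : subrel (Ecut t a b) t.
Proof. by move=> u v /andP []. Qed.

Lemma Ecut_sym (T : finType) (t : rel T) a b :
  symmetric t -> symmetric (Ecut t a b).
Proof.
move=> st u v; rewrite /Ecut st /isedge orbC; congr (_ && ~~ (_ || _)); apply andbC.
Qed.

Lemma F1 (T : finType) (t : rel T) a b :
  symmetric t -> acyclic t -> (forall x, ~~ t x x) -> t a b ->
  ~~ connect (Ecut t a b) a b.
Proof.
move=> st acyc irr tab; apply/negP => /connectP [p pE lastb].
move: lastb; case: (shortenP pE) => p' pE' up' _ lastb.
have Hs : 3 <= size (a :: p').
  case: p' pE' up' lastb => [|y [|z q]] //= pE' _ lastb.
  - by move: (irr a); rewrite -{2}lastb tab.
  - by move: pE'; rewrite /Ecut /isedge -lastb !eqxx /= andbF.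
move/negP: (acyc _ up' Hs); apply.
rewrite /= rcons_path (sub_path (@Ecut_sub _ t a b) pE') /=.
by rewrite -lastb st.
Qed.

Lemma F2 (T : finType) (t : rel T) a b :
  connected_graph t -> forall x,
  connect (Ecut t a b) a x || connect (Ecut t a b) b x.
Proof.
move=> conn x; have /connectP [p pt ->] := conn a x.
suff H : forall p y, connect (Ecut t a b) a y || connect (Ecut t a b) b y ->
   path t y p -> connect (Ecut t a b) a (last y p) || connect (Ecut t a b) b (last y p).
  by apply: H pt; rewrite connect0.
elim=> [|z q IH] y //= Hy /andP [tyz pq]; apply: IH pq.
case Eyz: (Ecut t a b y z).
  apply/orP; case/orP: Hy => H; [left|right]; exact: connect_trans H (connect1 Eyz).
move: Eyz; rewrite /Ecut tyz /= => /negbFE /orP [] /andP [_ /eqP ->].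
  by apply/orP; right; exact: connect0.
by apply/orP; left; exact: connect0.
Qed.

Lemma F3 (T : finType) (t : rel T) a b u v :
  connect (Ecut t a b) a u -> t u v -> ~~ connect (Ecut t a b) a v ->
  u = a /\ v = b.
Proof.
move=> cu tuv ncv; case Euv: (Ecut t a b u v).
  by move: ncv; rewrite (connect_trans cu (connect1 Euv)).
move: Euv; rewrite /Ecut tuv /= => /negbFE /orP [] /andP [/eqP eu /eqP ev];
  subst u v => //.
by move: ncv; rewrite connect0.
Qed.

Lemma step_lemma (T : finType) (t R : rel T) b w :
  subrel R t -> connect R b w -> w != b ->
  exists c, R b c /\ connect (Ecut t b c) c w.
Proof.
move=> sub /connectP [p pR ->]; move: pR.
move=> pR; case: (shortenP pR) => p' pR' up' _ neq.
case: p' pR' up' neq => [|c q] /=; first by rewrite eqxx.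
move=> /andP [Rbc pq] /andP [bn uq] neq; exists c; split => //.
apply/connectP; exists q => //.
suff H : forall q y, path R y q -> b \notin y :: q -> path (Ecut t b c) y q.
  by apply: H.
elim=> [|z r IH] y //= /andP [Ryz pr].
rewrite !in_cons => /norP [ny /norP [nz nr]].
rewrite /Ecut (sub _ _ Ryz) /isedge (eq_sym y b) (eq_sym z b) (negbTE ny) (negbTE nz) /= andbF.
by apply: (IH z pr); rewrite in_cons negb_or nz.
Qed.

Lemma sub_side (T : finType) (t : rel T) a b c :
  symmetric t -> acyclic t -> (forall x, ~~ t x x) ->
  Ecut t a b b c -> forall x,
  connect (Ecut t b c) c x -> connect (Ecut t a b) b x.
Proof.
move=> st acyc irr Ebc x /connectP [p pE ->].
have tbc : t b c by case/andP: Ebc.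
have nb : ~~ connect (Ecut t b c) c b.
  by rewrite -(eq_connect (@Ecut_swap _ t c b)); apply: F1 => //; rewrite st.
suff H : forall p y, connect (Ecut t b c) c y -> connect (Ecut t a b) b y ->
   path (Ecut t b c) y p -> connect (Ecut t a b) b (last y p).
  by apply: (H p c) => //; exact: connect1.
elim=> [|z q IH] y //= cy by_ /andP [Eyz pq].
have cz : connect (Ecut t b c) c z := connect_trans cy (connect1 Eyz).
apply: (IH z cz _ pq).
have tyz : t y z by case/andP: Eyz.
case Eab: (Ecut t a b y z); first exact: connect_trans by_ (connect1 Eab).
move: Eab; rewrite /Ecut tyz /= => /negbFE /orP [] /andP [/eqP ey /eqP ez];
  subst y z.
  by move: nb; rewrite cz.
by move: nb; rewrite cy.
Qed.

Lemma good_edge (T : finType) (t : rel T) (f : T -> T) (x0 : T) :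
  symmetric t -> acyclic t -> (forall x, ~~ t x x) -> connected_graph t ->
  (forall x, f x != x) ->
  exists a b, [/\ t a b, connect (Ecut t a b) b (f a) & connect (Ecut t a b) a (f b)].
Proof.
move=> st acyc irr conn fx.
have [c [tc cc]] := @step_lemma T t t x0 (f x0) (fun _ _ h => h) (conn _ _) (fx x0).
suff H : forall n a b, t a b -> connect (Ecut t a b) b (f a) ->
   #|[set x | connect (Ecut t a b) b x]| <= n ->
   exists a b, [/\ t a b, connect (Ecut t a b) b (f a) & connect (Ecut t a b) a (f b)].
  exact: (H _ x0 c tc cc (leqnn _)).
elim=> [|n IH] a b tab cfa.
  by rewrite (cardsD1 b) inE connect0.
move=> Hn.
case cfb: (connect (Ecut t a b) a (f b)); first by exists a, b.
have cfb' : connect (Ecut t a b) b (f b).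
  by have := F2 a b conn (f b); rewrite cfb.
have [c' [Ebc cc']] := @step_lemma T t (Ecut t a b) b (f b) (@Ecut_sub _ t a b) cfb' (fx b).
have tbc : t b c' by case/andP: Ebc.
apply: (IH b c' tbc cc').
rewrite -ltnS; apply: leq_trans Hn; apply: proper_card; apply/properP; split.
  by apply/subsetP => x; rewrite !inE; apply: sub_side.
exists b; rewrite !inE ?connect0 //.
by rewrite -(eq_connect (@Ecut_swap _ t c' b)); apply: F1 => //; rewrite st.
Qed.

Definition ham d (u v : d.-tuple bool) := #|[set i : 'I_d | tnth u i != tnth v i]|.
Definition compl d (v : d.-tuple bool) : d.-tuple bool := [tuple ~~ tnth v i | i < d].

Lemma ham_tri d (u v w : d.-tuple bool) : ham u w <= ham u v + ham v w.
Proof.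
rewrite /ham; apply: leq_trans (leq_card_setU _ _).
apply: subset_leq_card; apply/subsetP => i; rewrite !inE.
by case: (tnth u i); case: (tnth v i); case: (tnth w i).
Qed.

Lemma ham_sym d (u v : d.-tuple bool) : ham u v = ham v u.
Proof. by rewrite /ham; apply: eq_card => i; rewrite !inE eq_sym. Qed.

Lemma ham0 d (u : d.-tuple bool) : ham u u = 0.
Proof. by rewrite /ham; apply/eqP; rewrite cards_eq0; apply/eqP/setP => i; rewrite !inE eqxx. Qed.

Lemma walk_ham d (x : d.-tuple bool) p :
  path (@hypercube_adj d) x p -> ham x (last x p) <= size p.
Proof.
elim: p x => [|y q IH] x /=; first by rewrite ham0.
case/andP => /eqP axy pq; apply: leq_trans (ham_tri x y _) _.
by rewrite /ham in axy *; rewrite axy add1n ltnS IH.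
Qed.

Lemma ham_compl d (u v : d.-tuple bool) : ham (compl u) v = d - ham u v.
Proof.
rewrite /ham; transitivity #|~: [set i : 'I_d | tnth u i != tnth v i]|.
  by apply: eq_card => i; rewrite !inE tnth_mktuple; case: (tnth u i); case: (tnth v i).
have h := cardsC [set i : 'I_d | tnth u i != tnth v i]; move: h.
set A := [set i : 'I_d | _]; set B := #|~: A|; set a := #|A|.
by rewrite card_ord => <-; rewrite addKn.
Qed.

Lemma adj_compl d (u v : d.-tuple bool) :
  hypercube_adj (compl u) (compl v) = hypercube_adj u v.
Proof.
rewrite /hypercube_adj; congr (_ == 1); apply: eq_card => i.
by rewrite !inE !tnth_mktuple; case: (tnth u i); case: (tnth v i).
Qed.

Lemma cut_walk d (t : rel (d.-tuple bool)) a b :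
  subrel t (@hypercube_adj d) -> forall p x,
  connect (Ecut t a b) a x -> path t x p -> ~~ connect (Ecut t a b) a (last x p) ->
  ham x a + 1 + ham b (last x p) <= size p.
Proof.
move=> sub; elim=> [|y q IH] x /=; first by move=> ->.
move=> cx /andP [txy pq] nl.
case cy: (connect (Ecut t a b) a y).
  have := IH y cy pq nl; have := ham_tri x y a.
  have /eqP := sub _ _ txy; rewrite -/(ham x y) => hxy h1 h2; rewrite hxy in h1; move: h1 h2; move: (ham x a) (ham y a) (ham b _) => A B C; lia.
have [ex ey] := F3 cx txy (negbT cy); subst x y.
by rewrite ham0 add0n add1n ltnS walk_ham // (sub_path sub pq).
Qed.

Lemma gdist_lb (T : finType) (t : rel T) u v k :
  (forall n, walk_of_len t n u v -> k <= n) -> k <= #|T| -> k <= gdist t u v.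
Proof.
move=> H hT; rewrite /gdist.
set P := (fun n => walk_of_len t n u v).
case: (ltnP (find P (iota 0 #|T|)) (size (iota 0 #|T|))) => h.
  have := @nth_find _ 0 P (iota 0 #|T|); rewrite has_find => /(_ h).
  by rewrite nth_iota ?add0n; [apply: H | rewrite size_iota in h].
by apply: leq_trans h; rewrite size_iota.
Qed.

Lemma two_exp d : 2 * d <= 2 ^ d.
Proof.
elim: d => [|n IH] //; have := expn_gt0 2 n; rewrite expnS /=.
move: IH; move: (2 ^ n) => X; lia.
Qed.

Lemma lower d (t : rel (d.-tuple bool)) : 1 <= d ->
  spanning_tree (@hypercube_adj d) t -> 2 * d - 1 <= stretch (@hypercube_adj d) t.
Proof.
move=> d1 [st sub conn acyc].
have irr : forall x, ~~ t x x.
  by move=> x; apply/negP => /(sub x x)/eqP; rewrite -/(ham x x) ham0.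
have fx : forall x : d.-tuple bool, compl x != x.
  move=> x; apply/eqP => e; have := congr1 (fun w => tnth w (Ordinal d1)) e.
  by rewrite tnth_mktuple; case: (tnth x _).
have [a [b [tab cb ca]]] := good_edge (nseq_tuple d false) st acyc irr conn fx.
have hadj : hypercube_adj (compl b) (compl a) by rewrite adj_compl; apply: sub; rewrite st.
apply: leq_trans (@leq_bigmax_cond _ (fun p => hypercube_adj p.1 p.2)
   (fun p => gdist t p.1 p.2) (compl b, compl a) hadj).
apply: gdist_lb; last first.
  rewrite card_tuple card_bool; apply: leq_trans (two_exp d); lia.
move=> n /existsP [p /andP [pp /eqP pl]].
have nca : ~~ connect (Ecut t a b) a (compl a).
  apply/negP => caa; have := F1 st acyc irr tab; rewrite (connect_trans caa) //.
  by rewrite (sym_connect_sym (@Ecut_sym _ t a b st)).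
have := cut_walk sub ca pp; rewrite pl => /(_ nca).
rewrite /= size_tuple. rewrite (ham_compl b a). rewrite (ham_sym b (compl a)) ham_compl.
have /eqP h1 := sub _ _ tab; have /eqP h2 : hypercube_adj b a by apply: sub; rewrite st.
rewrite -/(ham a b) in h1; rewrite -/(ham b a) in h2; rewrite h1 h2; lia.
Qed.

Definition flip d (v : d.-tuple bool) (i : 'I_d) : d.-tuple bool :=
  [tuple (if j == i then ~~ tnth v j else tnth v j) | j < d].
Definition par_rel d (u v : d.-tuple bool) : bool :=
  if [pick i | tnth u i] is Some i then v == flip u i else false.
Definition trel d : rel (d.-tuple bool) := fun u v => par_rel u v || par_rel v u.
Definition wt d (v : d.-tuple bool) := #|[set i | tnth v i]|.
Definition zero d : d.-tuple bool := [tuple of nseq d false].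

Lemma wt_flip d (u : d.-tuple bool) i : tnth u i -> wt u = (wt (flip u i)).+1.
Proof.
move=> ui; rewrite /wt (cardsD1 i) inE ui add1n; congr _.+1; apply: eq_card => j.
rewrite !inE tnth_mktuple; case: (j =P i) => [->|]; by [rewrite ui | ].
Qed.

Lemma adj_flip d (u : d.-tuple bool) i : hypercube_adj u (flip u i).
Proof.
rewrite /hypercube_adj; apply/cards1P; exists i; apply/setP => j.
rewrite !inE tnth_mktuple; case: (j =P i) => _ /=; last by rewrite eqxx.
by case: (tnth u j).
Qed.

Lemma par_relP d (u v : d.-tuple bool) :
  par_rel u v -> exists2 i, tnth u i & v = flip u i.
Proof.
rewrite /par_rel; case: pickP => [i ui /eqP ->|] //; by exists i.
Qed.

Lemma par_rel_fun d (u v w : d.-tuple bool) : par_rel u v -> par_rel u w -> v = w.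
Proof.
rewrite /par_rel; case: pickP => [i ui /eqP -> /eqP ->|] //.
Qed.

Lemma par_rel_ex d (u : d.-tuple bool) : u != zero d -> exists v, par_rel u v.
Proof.
rewrite /par_rel; case: pickP => [i ui _|none]; first by exists (flip u i).
case/eqP; apply: eq_from_tnth => j; rewrite tnth_nseq.
by have := none j; case: (tnth u j).
Qed.

Lemma wt_zero d (u : d.-tuple bool) : u = zero d -> wt u = 0.
Proof.
move=> ->; rewrite /wt; apply/eqP; rewrite cards_eq0; apply/eqP/setP => j.
by rewrite !inE tnth_nseq.
Qed.

Lemma trel_sym d : symmetric (@trel d).
Proof. by move=> u v; rewrite /trel orbC. Qed.

Lemma adj_sym d : symmetric (@hypercube_adj d).
Proof.
move=> u v; rewrite /hypercube_adj; congr (_ == 1); apply: eq_card => j.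
by rewrite !inE eq_sym.
Qed.

Lemma trel_sub d : subrel (@trel d) (@hypercube_adj d).
Proof.
move=> u v /orP [] /par_relP [i _ ->]; first exact: adj_flip.
by rewrite adj_sym; apply: adj_flip.
Qed.

Definition W d n (x y : d.-tuple bool) :=
  exists p, [/\ size p = n, path (@trel d) x p & last x p = y].

Lemma W0 d (x : d.-tuple bool) : W 0 x x.
Proof. by exists [::]. Qed.

Lemma W1 d (x y : d.-tuple bool) : trel x y -> W 1 x y.
Proof. by exists [:: y]; rewrite /= andbT. Qed.

Lemma Wcat d m n (x y z : d.-tuple bool) : W m x y -> W n y z -> W (m + n) x z.
Proof.
move=> [p [sp pp lp]] [q [sq pq lq]]; exists (p ++ q).
by rewrite size_cat cat_path last_cat lp sp sq pp pq.
Qed.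

Lemma Wsym d n (x y : d.-tuple bool) : W n x y -> W n y x.
Proof.
elim: n x => [|n IH] x [p [sp pp lp]].
  case: p sp pp lp => //= _ _ ->. exact: W0.
case: p sp pp lp => //= z q [sq] /andP [xz pq] lq.
rewrite -addn1; apply: (Wcat (IH z _) (W1 _)); last by rewrite trel_sym.
by exists q.
Qed.

Lemma W_zero d (v : d.-tuple bool) : W (wt v) v (zero d).
Proof.
suff H : forall n v, wt v = n -> W n v (zero d) by apply: H.
move=> {v}; elim=> [|n IH] v hv.
  case: (v =P zero d) => [->|/eqP nz]; first exact: W0.
  have [w /par_relP [i vi ew]] := par_rel_ex nz.
  by move: hv; rewrite (wt_flip vi).
case: (v =P zero d) => [ez|/eqP nz]; first by move: hv; rewrite wt_zero.
have [w pw] := par_rel_ex nz; have [i vi ew] := par_relP pw.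
rewrite -add1n; apply: (Wcat (W1 _) (IH w _)); first by rewrite /trel pw.
by move: hv; rewrite (wt_flip vi) -ew => [[]].
Qed.

Lemma trel_down d (x y : d.-tuple bool) : trel x y -> wt y <= wt x -> par_rel x y.
Proof.
case/orP => // /par_relP [i yi ->]; by rewrite (wt_flip yi) ltnn.
Qed.

Lemma trel_acyclic d : acyclic (@trel d).
Proof.
move=> c uc sc; apply/negP => cyc.
case: c uc sc cyc => [|x0 c0] // uc sc cyc.
have x0c : x0 \in x0 :: c0 by rewrite mem_head.
case: (@arg_maxnP _ x0 (fun x => x \in x0 :: c0) (@wt d) x0c) => x xc xmax.
case: (rot_to xc) => i s e.
have us : uniq (x :: s) by rewrite -e rot_uniq.
have cs : cycle (@trel d) (x :: s) by rewrite -e rot_cycle.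
have ss : 3 <= size (x :: s) by rewrite -e size_rot.
have ms : forall y, y \in s -> wt y <= wt x.
  by move=> y ys; apply: xmax; rewrite -(mem_rot i) e in_cons ys orbT.
case: s e us cs ss ms => [|y s2] // e; case/lastP: s2 e => [|s3 z] // e us cs ss ms.
move: cs; rewrite /= rcons_path last_rcons => /andP [xy /andP [_ zx]].
move: us; rewrite /= => /andP [_ /andP [yn _]].
have yz : y != z by apply: contraNneq yn => ->; rewrite mem_rcons mem_head.
have pxy : par_rel x y by apply: trel_down xy (ms y _); rewrite mem_head.
have pxz : par_rel x z.
  apply: trel_down; first by rewrite trel_sym.
  by apply: ms; rewrite in_cons mem_rcons mem_head orbT.
by move: yz; rewrite (par_rel_fun pxy pxz) eqxx.
Qed.

Lemma W_conn d n (u v : d.-tuple bool) : W n u v -> connect (@trel d) u v.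
Proof. by case=> p [_ pp <-]; apply/connectP; exists p. Qed.

Lemma W_walk d n (u v : d.-tuple bool) : W n u v -> walk_of_len (@trel d) n u v.
Proof.
case=> p [sp pp lp]; apply/existsP.
have hs : size p == n by rewrite sp.
by exists (Tuple hs); rewrite /= pp lp eqxx.
Qed.

Lemma W_uv d (u v : d.-tuple bool) : W (wt u + wt v) u v.
Proof. exact: Wcat (W_zero u) (Wsym (W_zero v)). Qed.

Lemma gdist_ub (T : finType) (t : rel T) u v k :
  walk_of_len t k u v -> k < #|T| -> gdist t u v <= k.
Proof.
move=> wk kT; rewrite /gdist leqNgt; apply/negP => /(before_find 0).
by rewrite nth_iota ?size_iota // add0n wk.
Qed.

Lemma wt_bound d (u v : d.-tuple bool) : hypercube_adj u v -> wt u + wt v <= 2 * d - 1.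
Proof.
move/cards1P => [i Di].
have : i \in [set i0 | tnth u i0 != tnth v i0] by rewrite Di set11.
rewrite inE => uv.
have wle : forall w : d.-tuple bool, wt w <= d.
  by move=> w; apply: leq_trans (max_card _) _; rewrite card_ord.
have wlt : forall w : d.-tuple bool, ~~ tnth w i -> wt w < d.
  move=> w wi; have := cardsD1 i [set: 'I_d]; rewrite cardsT card_ord in_setT add1n.
  move=> h; rewrite [X in _ < X]h ltnS; apply: subset_leq_card; apply/subsetP => j.
  by rewrite !inE andbT; apply: contraTneq => ->.
have := wle u; have := wle v.
move: uv; case eu: (tnth u i); case ev: (tnth v i) => //= _.
  have := wlt v (negbT ev); lia.
have := wlt u (negbT eu); lia.
Qed.

Lemma upper d : 1 <= d -> stretch (@hypercube_adj d) (@trel d) <= 2 * d - 1.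
Proof.
move=> d1; apply/bigmax_leqP => [[u v]] /= adj.
apply: leq_trans (wt_bound adj).
apply: gdist_ub; first exact: W_walk (W_uv u v).
rewrite card_tuple card_bool; have := two_exp d; have := wt_bound adj.
have := expn_gt0 2 d; move: (2 ^ d) => X; lia.
Qed.

Unset Implicit Arguments.
Theorem corollary3p3 (d : nat) :
  1 <= d -> is_tree_stretch (@hypercube_adj d) (2 * d - 1).
Proof.
move=> d1; split; last by move=> t; exact: lower.
have st : spanning_tree (@hypercube_adj d) (@trel d).
  split; [exact: trel_sym | exact: trel_sub | | exact: trel_acyclic].
  by move=> u v; apply: W_conn (W_uv u v).
exists (@trel d); split => //; apply/eqP; rewrite eqn_leq upper //.
exact: lower.
Qed.
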